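(* When the number of features is $|F|=2$, the generalized student-proposing deferred acceptance algorithm with the LOICV proposing method is incentive compatible with rationality (IC-R).
   Context: Model: students $N$; colleges $M$, each college $c$ with positive integer capacity $x_c$ and strict preference $\succ_c$ over $N$; features $F$; utilities $u_s^f:M\to[0,1]$; for each student $s$ an independent distribution $\mu_s$ over weight vectors $w_s$ ($w_s^f\ge0$, $\sum_f w_s^f=1$). For realized $w_s$, $c\succeq_s^{w_s}c'$ iff $\sum_f w_s^fu_s^f(c)\ge\sum_f w_s^fu_s^f(c')$, strict version $\succ_s^{w_s}$; $\mathsf{null}$ ranked below any college. Generalized student-proposing DA: all students start unmatched with $R_s=\emptyset$; while some unmatched student $s$ has $R_s\ne M$, each such student proposes to $\mathsf{Next}(s,R_s)\notin R_s$ (computed from her reported data); each college keeps its $x_c$ most preferred students among those it holds and its new proposers and rejects the rest (rejected students add the college to $R_s$ and become unmatched). Output the final matching. LOICV: for each $c\notin R_s$, form the vector $(\Pr[c\succeq_s^{w_s}c'])_{c'\in M\setminus R_s,\,c'\ne c}$ sorted in ascending order; $\mathsf{Next}$ returns a college of $M\setminus R_s$ whose vector is lexicographically largest (ties broken randomly or by a predetermined rule). IC-R: each student $s$ may report any $(u_s',\mu_s')$ instead of her true data; with $\pi(s)$, $\pi'(s)$ her assignments under truthful report and misreport (others fixed), the algorithm is IC-R if $\Pr[\pi'(s)\succ_s^{w_s}\pi(s)]>1/2$ never occurs, the probability being over her true $w_s\sim\mu_s$ with true utilities. *)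

(* Defs.v *)
From HB Require Import structures.
From mathcomp Require Import all_boot all_order all_algebra.
From mathcomp Require Import all_classical all_reals all_analysis.
Set Implicit Arguments. Unset Strict Implicit. Unset Printing Implicit Defensive.
Import Order.TTheory GRing.Theory Num.Theory.
Local Open Scope ring_scope.


(* Two features: a weight vector is a pair w = (w^1, w^2) in R * R.
   A report (or true private data) of a student consists of the two
   feature utilities u^1, u^2 : M -> R and a distribution mu over weight
   vectors (a probability measure on R * R). *)
Record report (R : realType) (M : finType) := Report {
  util1 : M -> R;
  util2 : M -> R;
  wdist : probability (R * R)%type R }.

Definition valid_report (R : realType) (M : finType) (r : report R M) : Prop :=
  (forall c, 0 <= util1 r c <= 1 /\ 0 <= util2 r c <= 1) /\
  wdist r [set w | 0 <= w.1 /\ 0 <= w.2 /\ w.1 + w.2 = 1]%classic = 1%E.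

Definition wutil (R : realType) (M : finType) (u1 u2 : M -> R) (w : R * R) (c : M) : R :=
  w.1 * u1 c + w.2 * u2 c.

Definition prob_weak (R : realType) (M : finType) (r : report R M) (c c' : M) : R :=
  fine (wdist r [set w | wutil (util1 r) (util2 r) w c' <= wutil (util1 r) (util2 r) w c]%classic).

Definition loicv_vec (R : realType) (M : finType) (r : report R M) (Rs : {set M}) (c : M)
  : seq R :=
  sort <=%R [seq prob_weak r c c' | c' <- enum (~: Rs) & c' != c].

Fixpoint lex_le (R : realType) (s t : seq R) : bool :=
  match s, t with
  | [::], _ => true
  | _ :: _, [::] => false
  | x :: s', y :: t' => (x < y) || ((x == y) && lex_le s' t')
  end.

Definition loicv_best (R : realType) (M : finType) (r : report R M) (Rs : {set M})
  : {set M} :=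
  [set c in ~: Rs | [forall c' in ~: Rs, lex_le (loicv_vec r Rs c') (loicv_vec r Rs c)]].

Definition tie_rule (N M : finType) (tb : N -> {set M} -> option M) : Prop :=
  forall (s : N) (A : {set M}), A != finset.set0 -> exists2 c, tb s A = Some c & c \in A.

Definition loicv_next (R : realType) (N M : finType) (tb : N -> {set M} -> option M)
  (rep : N -> report R M) (s : N) (Rs : {set M}) : option M :=
  tb s (loicv_best (rep s) Rs).

Definition strict_total (N : finType) (p : rel N) : Prop :=
  [/\ irreflexive p, transitive p & forall a b, a != b -> p a b || p b a].

(* State of the DA: rejection sets R_s and current holding college (None = unmatched). *)
Definition da_state (N M : finType) := ((N -> {set M}) * (N -> option M))%type.

Definition da_init (N M : finType) : da_state N M := (fun _ => finset.set0, fun _ => None).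

Definition da_step (N M : finType) (nxt : N -> {set M} -> option M)
  (pref : M -> rel N) (cap : M -> nat) (st : da_state N M) : da_state N M :=
  let Rs := st.1 in let m := st.2 in
  let proposer s := (m s == None) && (Rs s != [set: M]) in
  let target s := if proposer s then nxt s (Rs s) else m s in
  let kept s := if target s is Some c then
                  (#|[pred t | (target t == Some c) && pref c t s]| < cap c)%N
                else false in
  (fun s => if target s is Some c then (if kept s then Rs s else c |: Rs s) else Rs s,
   fun s => if kept s then target s else None).

Definition da_terminal (N M : finType) (st : da_state N M) : bool :=
  [forall s, (st.2 s != None) || (st.1 s == [set: M])].

Definition da_outcome (N M : finType) (nxt : N -> {set M} -> option M)
  (pref : M -> rel N) (cap : M -> nat) (pi : N -> option M) : Prop :=
  exists k, da_terminal (iter k (da_step nxt pref cap) (da_init N M)) /\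
    (forall j, (j < k)%N -> ~~ da_terminal (iter j (da_step nxt pref cap) (da_init N M))) /\
    pi = (iter k (da_step nxt pref cap) (da_init N M)).2.

Definition spref (R : realType) (M : finType) (u1 u2 : M -> R) (w : R * R)
  (a b : option M) : Prop :=
  match a, b with
  | Some c, Some c' => wutil u1 u2 w c' < wutil u1 u2 w c
  | Some _, None => True
  | None, _ => False
  end.

Definition upd_report (R : realType) (N M : finType) (rep : N -> report R M)
  (s : N) (r : report R M) : N -> report R M :=
  fun t => if t == s then r else rep t.

(* Main.v *)
Require Import Defs.
From HB Require Import structures.
From mathcomp Require Import all_boot all_order.
From mathcomp Require Import zify.

Set Implicit Arguments. Unset Strict Implicit. Unset Printing Implicit Defensive.

Section Comb.
Variable N : finType.

Lemma best_ex (p : rel N) : strict_total p -> forall A : {set N}, A != finset.set0 ->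
  exists2 b, b \in A & forall t, t \in A -> t != b -> p b t.
Proof.
move=> [irr tr tot] A; have [n] := ubnP #|A|; elim: n A => // n IH A HA An0.
have [x xA] := finset.set0Pn _ An0.
case: (eqVneq (A :\ x) finset.set0) => [E|ne].
  exists x => // t tA tx; have : t \in A :\ x by rewrite !inE tx tA.
  by rewrite E inE.
have [|b] := IH (A :\ x) _ ne.
  by move: HA; rewrite (cardsD1 x A) xA add1n ltnS.
rewrite !inE => /andP[bx bA] Hb.
case Hpb: (p x b).
  exists x => // t tA tx; case: (eqVneq t b) => [->//|tb].
  by apply: (tr b x t Hpb); apply: Hb => //; rewrite !inE tx.
exists b => // t tA tb; case: (eqVneq t x) => [->|tx].
  by have := tot b x bx; rewrite Hpb orbF.
by apply: Hb => //; rewrite !inE tx.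
Qed.

Lemma flip_st (p : rel N) : strict_total p -> strict_total (fun x y => p y x).
Proof.
move=> [irr tr tot]; split => //.
- by move=> y x z /= H1 H2; apply: tr H2 H1.
- by move=> a b ab /=; rewrite orbC; apply: tot.
Qed.

Lemma kept_le (p : rel N) (T : {set N}) k : strict_total p ->
  #|[set t in T | #|[set t' in T | p t' t]| < k]| <= k.
Proof.
move=> Hp; set K := [set t in T | _]; rewrite leqNgt; apply/negP => Hk.
have Kn0 : K != finset.set0 by rewrite -card_gt0; apply: leq_ltn_trans Hk.
have [w wK Hw] := best_ex (flip_st Hp) Kn0.
have := wK; rewrite /K inE => /andP[wT wk].
have : K :\ w \subset [set t' in T | p t' w].
  apply/subsetP => t; rewrite in_setD1 => /andP[tw tK].
  move: (tK); rewrite /K !inE => /andP[-> _] /=; exact: Hw.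
move/subset_leq_card; move: Hk; rewrite (cardsD1 w K) wK add1n ltnS => H1 H2.
by move: (leq_trans H1 H2); rewrite leqNgt wk.
Qed.

Lemma kept_ge (p : rel N) (T : {set N}) k : strict_total p -> k <= #|T| ->
  k <= #|[set t in T | #|[set t' in T | p t' t]| < k]|.
Proof.
move=> Hp Tk; set K := [set t in T | _]; rewrite leqNgt; apply/negP => Hk.
have KT : K \subset T by apply/subsetP => t; rewrite /K inE => /andP[].
have Dn0 : T :\: K != finset.set0.
  rewrite -card_gt0 cardsD (setIidPr KT) subn_gt0; exact: leq_trans Hk Tk.
have [irr tr tot] := Hp.
have [b bD Hb] := best_ex Hp Dn0.
move: (bD); rewrite inE => /andP[bK bT].
have : [set t' in T | p t' b] \subset K.
  apply/subsetP => t; rewrite inE => /andP[tT ptb]; apply/negPn/negP => tK.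
  have tb : t != b by apply/eqP => E; move: ptb; rewrite E irr.
  have := Hb t _ tb; rewrite inE tK tT => /(_ isT) pbt.
  by have := tr _ _ _ pbt ptb; rewrite irr.
move/subset_leq_card => H; move: bK; rewrite inE bT /=.
by rewrite (leq_ltn_trans H Hk).
Qed.

End Comb.


Fixpoint Xch (M : finType) (f : {set M} -> option M) (k : nat) : {set M} :=
  match k with
  | 0 => finset.set0
  | k'.+1 => let Y := Xch f k' in if f Y is Some c then c |: Y else Y
  end.

Lemma Xch_mono (M : finType) (f : {set M} -> option M) j k : j <= k -> Xch f j \subset Xch f k.
Proof.
move=> /subnK <-; elim: (k - j) => [|n IH] //=.
case: (f _) => [c|] //; apply: subset_trans IH _; exact: subsetUr.
Qed.

Lemma Xch_next (M : finType) (f : {set M} -> option M) k d :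
  f (Xch f k) = Some d -> d \in Xch f k.+1.
Proof. by move=> /= ->; rewrite setU11. Qed.

Section DA.
Variables (N M : finType) (pref : M -> rel N) (cap : M -> nat).
Hypothesis Hpref : forall c, strict_total (pref c).
Variable nxt : N -> {set M} -> option M.

Definition tgt (st : da_state N M) s :=
  if (st.2 s == None) && (st.1 s != [set: M]) then nxt s (st.1 s) else st.2 s.
Definition kept (st : da_state N M) s :=
  if tgt st s is Some c then #|[pred t | (tgt st t == Some c) && pref c t s]| < cap c
  else false.

Lemma cardPS (P : pred N) : #|[pred t | P t]| = #|[set t | P t]|.
Proof. by apply: eq_card => t; rewrite inE. Qed.

Notation step := (da_step nxt pref cap).

Lemma step1 st s : (step st).1 s =
  if tgt st s is Some c then (if kept st s then st.1 s else c |: st.1 s) else st.1 s.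
Proof. by []. Qed.

Lemma step2 st s : (step st).2 s = if kept st s then tgt st s else None.
Proof. by []. Qed.

Definition Inv (st : da_state N M) :=
  [/\ forall u c, st.2 u = Some c -> nxt u (st.1 u) = Some c,
      forall c, #|[set u | st.2 u == Some c]| <= cap c,
      forall u c, c \in st.1 u -> cap c <= #|[set t | (st.2 t == Some c) && pref c t u]|
    & forall u, exists k, st.1 u = Xch (nxt u) k].

Lemma Inv_init : Inv (da_init N M).
Proof.
split => //=.
- by move=> c; rewrite (_ : [set u | _] = finset.set0) ?cards0 //; apply/setP => u; rewrite !inE.
- by move=> u c; rewrite inE.
- by move=> u; exists 0.
Qed.

Lemma tgt_m st u c : st.2 u = Some c -> tgt st u = Some c.
Proof. by rewrite /tgt => ->. Qed.

Lemma tgt_nxt st u c : Inv st -> tgt st u = Some c -> nxt u (st.1 u) = Some c.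
Proof.
move=> [I1 _ _ _]; rewrite /tgt; case: ifP => // _; exact: I1.
Qed.

Lemma step2_some st u c : (step st).2 u = Some c -> kept st u /\ tgt st u = Some c.
Proof. by rewrite step2; case: ifP. Qed.

Lemma Inv_step st : Inv st -> Inv (step st).
Proof.
move=> Hst; have [I1 I2 I3 I4] := Hst; split.
- move=> u c /step2_some [ku tu]; rewrite step1 tu ku; exact: tgt_nxt Hst tu.
- move=> c; set T := [set t | tgt st t == Some c].
  rewrite (_ : [set u | _] = [set t in T | #|[set t' in T | pref c t' t]| < cap c]).
    exact: kept_le.
  apply/setP => u; rewrite !inE step2 /kept.
  case E: (tgt st u) => [d|]; last by [].
  case: (eqVneq d c) => [->|dc].
    rewrite eqxx /= cardPS.
    have -> : [set t | (tgt st t == Some c) && pref c t u] = [set t' in T | pref c t' u].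
      by apply/setP => t; rewrite !inE.
    by case: ifP => _; rewrite ?eqxx.
  have nd : (Some d == Some c) = false.
    by apply/eqP => -[] /eqP; rewrite (negbTE dc).
  by case: ifP; rewrite nd.
- move=> u c Hc; set T := [set t | tgt st t == Some c].
  set B := [set t in T | pref c t u].
  have capB : cap c <= #|B|.
    have old : c \in st.1 u -> cap c <= #|B|.
      move=> /I3 H; apply: leq_trans H _; apply: subset_leq_card; apply/subsetP => t.
      by rewrite !inE => /andP[/eqP/tgt_m -> ->]; rewrite eqxx.
    move: Hc; rewrite step1; case E: (tgt st u) => [d|]; last exact: old.
    case: ifP => [_ /old //|kp]; rewrite in_setU1 => /orP[/eqP cd|/old //].
    move: kp; rewrite /kept E -cd => /negbT; rewrite -leqNgt => H.
    apply: leq_trans H _; apply: subset_leq_card; apply/subsetP => t; by rewrite !inE.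
  apply: leq_trans (kept_ge (Hpref c) capB) _.
  apply: subset_leq_card; apply/subsetP => t; rewrite !inE => /andP[/andP[tT ptu] Hk].
  rewrite ptu andbT step2 /kept (eqP tT) cardPS (_ : [set t0 | _] = [set t' in B | pref c t' t]).
    by rewrite Hk eqxx.
  apply/setP => t'; rewrite !inE; case: (tgt st t' == Some c) => //=.
  apply/idP/idP => [H|/andP[]//]; rewrite H andbT.
  by have [_ tr _] := Hpref c; apply: tr ptu.
- move=> u; have [k Hk] := I4 u; rewrite step1.
  case E: (tgt st u) => [d|]; last by exists k.
  case: ifP => _; first by exists k.
  exists k.+1; rewrite /= -Hk (tgt_nxt Hst E) //.
Qed.

Lemma Inv_iter k : Inv (iter k step (da_init N M)).
Proof. elim: k => [|k IH] /=; [exact: Inv_init | exact: Inv_step]. Qed.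

Lemma step_mono (st : da_state N M) u : st.1 u \subset (step st).1 u.
Proof.
rewrite step1; case: (tgt st u) => [d|] //; case: ifP => _ //; exact: subsetUr.
Qed.

Lemma iter_mono j k u : j <= k ->
  (iter j step (da_init N M)).1 u \subset (iter k step (da_init N M)).1 u.
Proof.
move=> /subnK <-; elim: (k - j) => [|n IH] //.
apply: subset_trans IH _; exact: step_mono.
Qed.

Lemma F7 (st : da_state N M) u c :
  c \notin st.1 u -> c \in (step st).1 u -> (step st).2 u = None.
Proof.
move=> cn; rewrite step1 step2; case: (tgt st u) => [d|]; last by rewrite (negbTE cn).
by case: ifP => //; rewrite (negbTE cn).
Qed.

Lemma F5 (st : da_state N M) u c : st.2 u = Some c -> (step st).2 u = None -> c \in (step st).1 u.
Proof.
move=> H; rewrite step1 step2 (tgt_m H); case: ifP => //= _ _; exact: setU11.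
Qed.

Lemma F6 (st : da_state N M) u c : st.2 u = Some c -> (step st).2 u != None -> (step st).2 u = Some c.
Proof. by move=> H; rewrite step2 (tgt_m H); case: ifP. Qed.

Lemma F3 (st : da_state N M) u t c : Inv st -> c \in st.1 u -> st.2 t = Some c -> pref c t u.
Proof.
move=> [_ I2 I3 _] /I3 H tc.
have sub : [set t | (st.2 t == Some c) && pref c t u] \subset [set u | st.2 u == Some c].
  by apply/subsetP => x; rewrite !inE => /andP[].
have : [set t | (st.2 t == Some c) && pref c t u] == [set u | st.2 u == Some c].
  by rewrite eqEcard sub /=; apply: leq_trans (I2 c) H.
by move/eqP/setP/(_ t); rewrite !inE tc eqxx /= => ->.
Qed.

End DA.


Section Main.
Variables (N M : finType) (pref : M -> rel N) (cap : M -> nat).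
Hypothesis Hpref : forall c, strict_total (pref c).

Lemma term_none (st : da_state N M) u : da_terminal st -> st.2 u = None -> st.1 u = [set: M].
Proof. by move=> /forallP/(_ u) /orP[/negP H|/eqP //] E; rewrite E in H. Qed.

Lemma asym c a b : pref c a b -> pref c b a -> False.
Proof.
have [irr tr _] := Hpref c => H1 H2; by have := tr _ _ _ H1 H2; rewrite irr.
Qed.

Lemma first_in (nxt : N -> {set M} -> option M) u c n :
  c \in (iter n (da_step nxt pref cap) (da_init N M)).1 u ->
  exists j0, [/\ j0 < n, c \notin (iter j0 (da_step nxt pref cap) (da_init N M)).1 u
                & c \in (iter j0.+1 (da_step nxt pref cap) (da_init N M)).1 u].
Proof.
elim: n => [|n IH]; first by rewrite /= inE.
case: (boolP (c \in (iter n (da_step nxt pref cap) (da_init N M)).1 u)) => [/IH [j0 [H1 H2 H3]] _|cn cin].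
  by exists j0; split => //; apply: ltnW.
by exists n.
Qed.

Theorem da_sp (nxt1 nxt2 : N -> {set M} -> option M) s :
  (forall u, u != s -> nxt1 u = nxt2 u) ->
  forall k1 k2, da_terminal (iter k1 (da_step nxt1 pref cap) (da_init N M)) ->
  da_terminal (iter k2 (da_step nxt2 pref cap) (da_init N M)) ->
  forall c, (iter k2 (da_step nxt2 pref cap) (da_init N M)).2 s = Some c ->
  c \notin (iter k1 (da_step nxt1 pref cap) (da_init N M)).1 s.
Proof.
move=> Hs k1 k2 T1 T2 c0 Hc0; apply/negP => Hin.
pose stj j := iter j (da_step nxt1 pref cap) (da_init N M).
set S1 := iter k1 _ _ in T1 Hin; set S2 := iter k2 _ _ in T2 Hc0.
have Inv1 : Inv pref cap nxt1 S1 by apply: Inv_iter.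
have Inv2 : Inv pref cap nxt2 S2 by apply: Inv_iter.
have Invj : forall j, Inv pref cap nxt1 (stj j) by move=> j; apply: Inv_iter.
have [I11 I12 I13 I14] := Inv1; have [I21 I22 I23 I24] := Inv2.
pose Sp := [set t | if S2.2 t is Some c then c \in S1.1 t else false].
have sS : s \in Sp by rewrite inE Hc0.
have Hall : forall t, t \in Sp -> exists c, S2.2 t = Some c /\ c \in S1.1 t.
  by move=> t; rewrite inE; case: (S2.2 t) => // c H; exists c.
have Tr1 : forall u c, u != s -> u \notin Sp -> c \in S1.1 u -> c \in S2.1 u.
  move=> u c us uS cin; case E2: (S2.2 u) => [d|]; last by rewrite (term_none T2 E2) inE.
  have dn : d \notin S1.1 u by move: uS; rewrite inE E2.
  have [j Ej] := I14 u; have [k Ek] := I24 u; rewrite -(Hs u us) in Ek.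
  have fd : nxt1 u (Xch (nxt1 u) k) = Some d by rewrite -Ek (Hs u us); apply: I21 E2.
  case: (leqP j k) => [jk|kj].
    by rewrite Ek; apply: (subsetP (Xch_mono _ jk)); rewrite -Ej.
  have := subsetP (Xch_mono (nxt1 u) kj) d (Xch_next fd).
  by rewrite -Ej (negbTE dn).
have Tr2 : forall u c, u != s -> u \notin Sp -> S1.2 u = Some c -> S2.2 u != Some c ->
    c \in S2.1 u.
  move=> u c us uS E1 n2; case E2: (S2.2 u) => [d|]; last by rewrite (term_none T2 E2) inE.
  have dn : d \notin S1.1 u by move: uS; rewrite inE E2.
  have [j Ej] := I14 u; have [k Ek] := I24 u; rewrite -(Hs u us) in Ek.
  have fd : nxt1 u (Xch (nxt1 u) k) = Some d by rewrite -Ek (Hs u us); apply: I21 E2.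
  have fc : nxt1 u (Xch (nxt1 u) j) = Some c by rewrite -Ej; apply: I11 E1.
  case: (ltngtP j k) => [jk|kj|jk].
  - by rewrite Ek; apply: (subsetP (Xch_mono _ jk)); apply: Xch_next fc.
  - have := subsetP (Xch_mono (nxt1 u) kj) d (Xch_next fd).
    by rewrite -Ej (negbTE dn).
  - by move: fd n2; rewrite -jk fc E2 => -[->]; rewrite eqxx.
pose Co := [set o : option M | [exists t in Sp, S2.2 t == o]].
have key : forall o, o \in Co ->
    #|[set t in Sp | S2.2 t == o]| <= #|[set t in Sp | S1.2 t == o]|.
  move=> o; rewrite inE => /existsP[tc /andP[tcS /eqP E]].
  have [c [Ec cin]] := Hall tc tcS; rewrite -E Ec.
  pose H1 := [set t | S1.2 t == Some c]; pose H2 := [set t | S2.2 t == Some c].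
  have cH1 : #|H1| = cap c.
    apply/eqP; rewrite eqn_leq I12 /=; apply: leq_trans (I13 _ _ cin) _.
    by apply: subset_leq_card; apply/subsetP => x; rewrite !inE => /andP[].
  have sub1 : H1 :\: H2 \subset [set t in Sp | S1.2 t == Some c].
    apply/subsetP => t; rewrite !inE => /andP[n2 e1]; rewrite e1 andbT.
    case: (eqVneq t s) => [->|ts]; first by move: sS; rewrite inE.
    apply/negPn/negP => tS.
    have tS' : t \notin Sp by rewrite inE.
    have := Tr2 t c ts tS' (eqP e1) n2 => cin2.
    have p1 := F3 Inv2 cin2 Ec.
    have p2 := F3 Inv1 cin (eqP e1).
    exfalso; exact: asym p1 p2.
  have sub2 : [set t in Sp | S2.2 t == Some c] \subset H2 :\: H1.
    apply/subsetP => t; rewrite !inE => /andP[tS e2]; rewrite e2 andbT.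
    move: tS; rewrite (eqP e2) => cin'.
    apply/negP => /eqP e1; have := F3 Inv1 cin' e1; by have [-> _ _] := Hpref c.
  apply: leq_trans (subset_leq_card sub2) _; apply: leq_trans _ (subset_leq_card sub1).
  rewrite !cardsD setIC cH1; apply: leq_sub2r; exact: I22.
have sumB : #|Sp| = \sum_(o in Co) #|[set t in Sp | S2.2 t == o]|.
  rewrite -sum1_card (partition_big (fun t => S2.2 t) (mem Co)) /=.
    by apply: eq_bigr => o _; rewrite sum1dep_card.
  by move=> t tS; rewrite inE; apply/existsP; exists t; rewrite tS eqxx.
have sumA : \sum_(o in Co) #|[set t in Sp | S1.2 t == o]| =
    #|[set t in Sp | S1.2 t \in Co]|.
  rewrite -sum1_card (partition_big (fun t => S1.2 t) (mem Co)) /=.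
    apply: eq_bigr => o oC; rewrite sum1dep_card; apply: eq_card => t; rewrite !inE.
    move: oC; rewrite inE => oC; case: eqP => [->|_]; by rewrite ?oC ?andbT ?andbF.
  by move=> t; rewrite inE => /andP[].
have Hco : forall t, t \in Sp -> S1.2 t \in Co.
  have sub : [set t in Sp | S1.2 t \in Co] \subset Sp.
    by apply/subsetP => t; rewrite inE => /andP[].
  have : [set t in Sp | S1.2 t \in Co] == Sp.
    rewrite eqEcard sub /= sumB -sumA; apply: leq_sum => o; exact: key.
  by move=> /eqP/setP E t tS; move: (E t); rewrite tS inE tS /=.
have Hmatched : forall t, t \in Sp -> exists c, S1.2 t = Some c /\
    exists t', [/\ t' \in Sp, S2.2 t' = Some c & c \in S1.1 t'].
  move=> t /Hco; rewrite inE => /existsP[t' /andP[t'S /eqP E]].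
  have [c [Ec cin]] := Hall t' t'S; exists c; split; first by rewrite -E.
  by exists t'.
have k1pos : 0 < k1.
  have [c [E _]] := Hmatched s sS; rewrite lt0n; apply/negP => /eqP k0.
  by move: E; rewrite /S1 k0.
have S1E : S1 = stj k1 by [].
pose Q j := (j < k1) && [exists t in Sp, (stj j).2 t == None].
have exQ : exists j, Q j by exists 0; rewrite /Q k1pos /=; apply/existsP; exists s; rewrite sS.
have ubQ : forall j, Q j -> j <= k1 by move=> j /andP[/ltnW].
case: (ex_maxnP exQ ubQ) => r /andP[rk /existsP[t /andP[tS /eqP tr]]] Hmax.
have Hn : forall j u, r < j <= k1 -> u \in Sp -> (stj j).2 u != None.
  move=> j u /andP[rj jk] uS; case: (ltngtP j k1) => [jk'|kj|->].
  - apply/negP => /eqP E; have : Q j by rewrite /Q jk' /=; apply/existsP; exists u; rewrite uS E.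
    by move/Hmax; rewrite leqNgt rj.
  - by move: jk; rewrite leqNgt kj.
  - by have [c [E _]] := Hmatched u uS; rewrite -S1E E.
have pers : forall n, r.+1 + n <= k1 -> (stj (r.+1 + n)).2 t = (stj r.+1).2 t.
  elim => [|n IH]; first by rewrite addn0.
  move=> H; rewrite addnS in H *.
  have H' : r.+1 + n <= k1 by apply: ltnW.
  rewrite -(IH H'); case E: ((stj (r.+1 + n)).2 t) => [x|].
    apply: (F6 E); apply: (Hn (r.+1 + n).+1 t _ tS); apply/andP; split; [lia | exact: H].
  have : r < r.+1 + n <= k1 by apply/andP; split; lia.
  by move/(Hn _ t)/(_ tS); rewrite E.
have [c [Ect [t' [t'S Ec' cin']]]] := Hmatched t tS.
have Hr1 : (stj r.+1).2 t = Some c.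
  by rewrite -Ect S1E -(subnKC rk) pers // (subnKC rk).
have [j0 [j0k cn0 cin0]] := first_in cin'.
have j0r : j0.+1 <= r.
  rewrite leqNgt; apply/negP => rj0.
  have := Hn j0.+1 t' _ t'S; rewrite rj0 j0k => /(_ isT).
  by rewrite (F7 cn0 cin0).
have cinr : c \in (stj r).1 t' by apply: (subsetP (iter_mono _ _ _ _ j0r)).
pose H := [set u | (stj r).2 u == Some c].
pose H' := [set u | (stj r.+1).2 u == Some c].
have [I1r I2r I3r I4r] := Invj r.
have [_ I2r' _ _] := Invj r.+1.
have capH : cap c <= #|H|.
  apply: leq_trans (I3r _ _ cinr) _; apply: subset_leq_card; apply/subsetP => x.
  by rewrite !inE => /andP[].
have tH : t \notin H by rewrite inE tr.
have : ~~ (t |: H \subset H').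
  apply/negP => sub; have := subset_leq_card sub; rewrite cardsU1 tH add1n => Hlt.
  have := leq_trans Hlt (I2r' c); move: capH; lia.
case/subsetPn => u; rewrite in_setU1 => /orP[/eqP ->|uH]; first by rewrite inE Hr1 eqxx.
rewrite inE => uH'.
have Eu : (stj r).2 u = Some c by move: uH; rewrite inE => /eqP.
have Eu' : (stj r.+1).2 u = None.
  by apply/eqP; apply/negPn/negP => /(F6 Eu) E; rewrite E eqxx in uH'.
have cu1 : c \in (stj r.+1).1 u := F5 Eu Eu'.
have p1 : pref c u t' := F3 (Invj r) cinr Eu.
have uS : u \notin Sp.
  apply/negP => uS; have := Hn r.+1 u; rewrite ltnSn rk Eu' /= => /(_ isT uS).
  by [].
have us : u != s by apply/eqP => E; rewrite E sS in uS.
have cu2 : c \in S1.1 u by apply: (subsetP (iter_mono _ _ _ _ rk)).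
have p2 := F3 Inv2 (Tr1 u c us uS cu2) Ec'.
exfalso; exact: asym p1 p2.
Qed.

End Main.


From mathcomp Require Import all_algebra.
From mathcomp Require Import all_classical all_reals all_analysis.
From mathcomp Require Import ring lra.
Import Order.TTheory GRing.Theory Num.Theory.
Local Open Scope ring_scope.

Lemma lex_total (R : realType) (s t : seq R) : lex_le s t || lex_le t s.
Proof.
elim: s t => [|x s IH] [|y t] //=; case: (ltgtP x y) => //= ->; rewrite eqxx /=.
Qed.

Lemma lex_trans (R : realType) : transitive (@lex_le R).
Proof.
move=> t s; elim: s t => [|x s IH] [|y t] [|z u] //=.
case/orP => [xy|/andP[/eqP <- st]]; case/orP => [yz|/andP[/eqP <- tu]].
- by rewrite (lt_trans xy yz).
- by rewrite xy.
- by rewrite yz.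
- by rewrite eqxx (IH _ _ st tu) orbT.
Qed.

Lemma lex_head (R : realType) x (s : seq R) y t : lex_le (x :: s) (y :: t) -> x <= y.
Proof. by case/orP => [/ltW|/andP[/eqP -> _]]. Qed.

Lemma max_ex (T : finType) (le : rel T) : (forall x y, le x y || le y x) -> transitive le ->
  forall A : {set T}, A != finset.set0 -> exists2 b, b \in A & forall t, t \in A -> le t b.
Proof.
move=> tot tr A; have [n] := ubnP #|A|; elim: n A => // n IH A HA An0.
have [x xA] := finset.set0Pn _ An0.
have refl y : le y y by have := tot y y; rewrite orbb.
case: (eqVneq (A :\ x) finset.set0) => [E|ne].
  exists x => // t tA; case: (eqVneq t x) => [->//|tx].
  have : t \in A :\ x by rewrite !inE tx tA.
  by rewrite E inE.
have [|b] := IH (A :\ x) _ ne.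
  by move: HA; rewrite (cardsD1 x A) xA add1n ltnS.
rewrite !inE => /andP[bx bA] Hb.
case Hpb: (le x b).
  exists b => // t tA; case: (eqVneq t x) => [->//|tx].
  by apply: Hb; rewrite !inE tx.
exists x => // t tA; case: (eqVneq t x) => [->//|tx].
have xb : le b x by have := tot x b; rewrite Hpb.
by apply: (tr b) xb; apply: Hb; rewrite !inE tx.
Qed.

Lemma size_loicv (R : realType) (M : finType) (r : report R M) Rs c :
  c \in ~: Rs -> size (loicv_vec r Rs c) = (#|~: Rs| - 1)%N.
Proof.
move=> cA; rewrite /loicv_vec size_sort size_map size_filter cardE.
have := count_predC (pred1 c) (enum (~: Rs)).
have := count_uniq_mem c (enum_uniq (mem (~: Rs))); rewrite mem_enum cA /= => ->.
move=> <-; rewrite add1n subSS subn0; apply: eq_count => x /=; by [].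
Qed.

Lemma best_nonempty (R : realType) (M : finType) (r : report R M) Rs :
  ~: Rs != finset.set0 -> loicv_best r Rs != finset.set0.
Proof.
move=> An0.
have [b bA Hb] := @max_ex M (fun x y => lex_le (loicv_vec r Rs x) (loicv_vec r Rs y))
  (fun x y => lex_total _ _) (fun x y z => @lex_trans R _ _ _) _ An0.
apply/finset.set0Pn; exists b; rewrite /loicv_best inE bA /=.
by apply/forallP => x; apply/implyP => xA; apply: Hb.
Qed.

Lemma loicv_half (R : realType) (M : finType) (r : report R M) Rs c c' cw :
  c \in loicv_best r Rs -> c' \in ~: Rs -> c' != c -> cw \in ~: Rs ->
  (forall x, x \in ~: Rs -> 2^-1 <= prob_weak r cw x) -> 2^-1 <= prob_weak r c c'.
Proof.
rewrite /loicv_best inE => /andP[cA /forallP H] c'A c'c cwA Hcw.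
have lx := implyP (H cw) cwA.
have mem : prob_weak r c c' \in loicv_vec r Rs c.
  by rewrite /loicv_vec mem_sort; apply/mapP; exists c' => //; rewrite mem_filter c'c mem_enum.
have sz := size_loicv r cA; have szw := size_loicv r cwA.
have srt : sorted <=%R (loicv_vec r Rs c) by apply: sort_sorted; exact: le_total.
move: lx mem sz szw srt; case E: (loicv_vec r Rs c) => [//|x t].
case Ew: (loicv_vec r Rs cw) => [|y t'] //=; first by move=> _ _ <-.
move=> /lex_head xy; rewrite inE => /orP[/eqP ->|pt] _ _ srt.
- apply: le_trans xy.
  have : y \in loicv_vec r Rs cw by rewrite Ew mem_head.
  rewrite /loicv_vec mem_sort => /mapP[z]; rewrite mem_filter mem_enum => /andP[_ zA] ->.
  exact: Hcw.
- have := order_path_min le_trans srt => /allP /(_ _ pt); apply: le_trans; apply: le_trans xy.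
  have : y \in loicv_vec r Rs cw by rewrite Ew mem_head.
  rewrite /loicv_vec mem_sort => /mapP[z]; rewrite mem_filter mem_enum => /andP[_ zA] ->.
  exact: Hcw.
Qed.


Unset Implicit Arguments.
Local Open Scope ring_scope.

Section Prob.
Local Open Scope classical_set_scope.
Variable R : realType.
Variable P : probability (R * R)%type R.

Lemma meas_aff (a b c : R) : measurable_fun setT (fun w : R * R => a * w.1 + b * w.2 + c).
Proof.
apply: measurable_realfun.measurable_funD; last exact: measurable_cst.
apply: measurable_realfun.measurable_funD; apply: measurable_realfun.measurable_funM; try exact: measurable_cst.
- exact: measurable_fst.
- exact: measurable_snd.
Qed.

Lemma meas_of (Q : R * R -> Prop) a b c :
  (forall w, Q w <-> 0 <= a * w.1 + b * w.2 + c) -> measurable [set w | Q w].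
Proof.
move=> H.
have -> : [set w | Q w] = setT `&` (fun w : R * R => a * w.1 + b * w.2 + c) @^-1` `[0, +oo[.
  apply/seteqP; split => w /=.
    by move/H => h; split => //; rewrite /= in_itv /= andbT.
  by move=> [_]; rewrite /= in_itv /= andbT => /H.
by apply: meas_aff => //; apply: measurable_itv.
Qed.

Definition pr (A : set (R * R)) := fine (P A).

Lemma prE A : measurable A -> P A = (pr A)%:E.
Proof.
move=> mA; rewrite /pr fineK // ge0_fin_numE ?measure_ge0 //.
by apply: le_lt_trans (probability_le1 P mA) _; rewrite ltry.
Qed.

Lemma pr_ge0 A : measurable A -> 0 <= pr A.
Proof. by move=> mA; rewrite -lee_fin -prE ?measure_ge0. Qed.

Lemma pr_le1 A : measurable A -> pr A <= 1.
Proof. by move=> mA; rewrite -lee_fin -prE // probability_le1. Qed.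

Lemma pr_T : pr setT = 1.
Proof. by rewrite /pr probability_setT. Qed.

Lemma pr_le A B : measurable A -> measurable B -> A `<=` B -> pr A <= pr B.
Proof.
by move=> mA mB AB; rewrite -lee_fin -!prE //; apply: le_measure => //; rewrite inE.
Qed.

Lemma pr_C A : measurable A -> pr (~` A) = 1 - pr A.
Proof.
move=> mA; have := probability_setC P mA; rewrite prE ?prE //; last exact: measurableC.
by move=> [].
Qed.

Lemma pr_U A B : measurable A -> measurable B -> pr (A `|` B) <= pr A + pr B.
Proof.
move=> mA mB; rewrite -lee_fin EFinD -!prE //; last exact: measurableU.
exact: measureU2.
Qed.


Lemma meas_aff_ge a b c : measurable [set w : R * R | 0 <= a * w.1 + b * w.2 + c].
Proof. exact: (meas_of _ a b c). Qed.

Definition simplex : set (R * R) := [set w | 0 <= w.1 /\ 0 <= w.2 /\ w.1 + w.2 = 1].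

Lemma meas_simplex : measurable simplex.
Proof.
have -> : simplex = [set w | 0 <= 1 * w.1 + 0 * w.2 + 0] `&` [set w | 0 <= 0 * w.1 + 1 * w.2 + 0]
   `&` [set w | 0 <= 1 * w.1 + 1 * w.2 + (-1)] `&` [set w | 0 <= (-1) * w.1 + (-1) * w.2 + 1].
  apply/seteqP; split => w /=.
    by move=> [h1 [h2 h3]]; do !split; lra.
  by move=> [[[h1 h2] h3] h4]; do !split; lra.
by do !apply: measurableI; apply: meas_aff_ge.
Qed.

Lemma mle x : measurable [set w : R * R | w.1 <= x].
Proof. by apply: (meas_of _ (-1) 0 x) => w; split => /=; lra. Qed.

Lemma mge x : measurable [set w : R * R | x <= w.1].
Proof. by apply: (meas_of _ 1 0 (- x)) => w; split => /=; lra. Qed.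

Lemma pr_sub A B : measurable A -> measurable B -> pr simplex = 1 ->
  (forall w, simplex w -> A w -> B w) -> pr A <= pr B.
Proof.
move=> mA mB hS AB.
have mC := measurableC meas_simplex.
have : pr A <= pr (B `|` ~` simplex).
  apply: pr_le => //; first exact: measurableU.
  move=> w Aw; case: (pselect (simplex w)) => Sw; [left; exact: AB | by right].
move=> /le_trans /(_ (pr_U _ _ mB mC)); rewrite pr_C; last exact: meas_simplex.
rewrite hS; lra.
Qed.

Lemma median : pr simplex = 1 -> exists m : R,
  [/\ forall y, m < y -> 2^-1 <= pr [set w | w.1 <= y],
      forall y, y < m -> 2^-1 <= pr [set w | y <= w.1]
    & 1 <= pr [set w | w.1 <= m] + pr [set w | m <= w.1]].
Proof.
move=> hS.
pose F x := pr [set w : R * R | w.1 <= x].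
pose E := [set x | 2^-1 <= F x].
have E1 : E 1.
  have : pr simplex <= F 1.
    apply: pr_sub => //; [exact: meas_simplex | exact: mle |].
    by move=> w [h1 [h2 h3]] _ /=; lra.
  rewrite /E /= hS; lra.
have lb : lbound E 0.
  move=> x; rewrite /E /= /F => Hx; rewrite leNgt; apply/negP => x0.
  have : pr [set w : R * R | w.1 <= x] <= 0.
    have -> : 0 = pr (~` simplex) by rewrite pr_C ?hS ?subrr //; exact: meas_simplex.
    apply: pr_le; [exact: mle | exact: measurableC meas_simplex |].
    by move=> w /= wx [h1 _]; lra.
  lra.
have hinf : has_inf E by split; [exists 1 | exists 0].
exists (inf E); split.
- move=> y my; have ey0 : 0 < y - inf E by rewrite subr_gt0.
  have [e Ee ey] := inf_adherent ey0 hinf.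
  apply: le_trans Ee _; apply: pr_le; [exact: mle | exact: mle |].
  by move=> w /= we; rewrite addrC subrK in ey; lra.
- move=> y ym.
  have nE : ~ E y by move=> Ey; have := ge_inf (hinf.2) Ey; lra.
  have : 1 - F y <= pr [set w | y <= w.1].
    rewrite -pr_C; last exact: mle.
    apply: pr_le; [exact: measurableC (mle _) | exact: mge |].
    by move=> w /= /negP; rewrite -ltNge => /ltW.
  rewrite /E /= in nE; move/negP: nE; rewrite -ltNge => h; lra.
- apply: le_trans (pr_U _ _ (mle _) (mge _)); rewrite -pr_T; apply: pr_le => //.
    exact: measurableU (mle _) (mge _).
  by move=> w _ /=; case: (lerP w.1 (inf E)) => h; [left | right; apply: ltW].
Qed.


Lemma condorcet (M : finType) (u1 u2 : M -> R) (A : {set M}) : pr simplex = 1 -> A != finset.set0 ->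
  exists2 cw, cw \in A & forall c, c \in A ->
    2^-1 <= pr [set w | wutil u1 u2 w c <= wutil u1 u2 w cw].
Proof.
move=> hS An0; have [m [P1 P2 P3]] := median hS.
have [s [hs Hs]] : exists s : R, (s = 1 \/ s = -1) /\ 2^-1 <= pr [set w | s * (w.1 - m) <= 0].
  case: (lerP (2^-1) (pr [set w | w.1 <= m])) => h.
    exists 1; split; first by left.
    have -> : [set w | 1 * (w.1 - m) <= 0] = [set w : R * R | w.1 <= m].
      by apply/seteqP; split => w /=; lra.
    exact: h.
  exists (-1); split; first by right.
  have -> : [set w | -1 * (w.1 - m) <= 0] = [set w : R * R | m <= w.1].
    by apply/seteqP; split => w /=; lra.
  lra.
have P12 : forall y, s * (y - m) < 0 -> 2^-1 <= pr [set w | s * (y - w.1) <= 0].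
  move=> y; case: hs => -> hy.
    have -> : [set w | 1 * (y - w.1) <= 0] = [set w : R * R | y <= w.1].
      by apply/seteqP; split => w /=; lra.
    by apply: P2; lra.
  have -> : [set w | -1 * (y - w.1) <= 0] = [set w : R * R | w.1 <= y].
    by apply/seteqP; split => w /=; lra.
  by apply: P1; lra.
pose g c := m * u1 c + (1 - m) * u2 c; pose sl c := u1 c - u2 c.
have [c0 c0A] := finset.set0Pn _ An0.
have [cm cmA Hcm] := @arg_maxP _ _ M c0 [pred c | c \in A] g c0A.
have cmA1 : cm \in A by exact: cmA.
have cmA2 : cm \in [pred c | (c \in A) && (g c == g cm)] by rewrite inE cmA1 eqxx.
have [cw /andP[cwA /eqP gcw] Hcw] := @arg_minP _ _ M cm [pred c | (c \in A) && (g c == g cm)]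
  (fun c => s * sl c) cmA2.
exists cw => // c cA.
pose h0 := g cw - g c; pose be := sl cw - sl c.
have h0ge : 0 <= h0 by rewrite /h0 gcw subr_ge0; exact: Hcm.
have tie : h0 = 0 -> s * be <= 0.
  move=> h00; have : s * sl cw <= s * sl c.
    apply: Hcw; rewrite inE cA /=; apply/eqP; rewrite -gcw; move: h00; rewrite /h0; lra.
  rewrite /be; lra.
have mB : measurable [set w | wutil u1 u2 w c <= wutil u1 u2 w cw].
  apply: (meas_of _ (u1 cw - u1 c) (u2 cw - u2 c) 0) => w; rewrite /wutil; split => /=; lra.
have key : forall w, simplex w -> 0 <= h0 + be * (w.1 - m) ->
    wutil u1 u2 w c <= wutil u1 u2 w cw.
  move=> w [_ [_ hw]] H; rewrite -subr_ge0.
  have -> : wutil u1 u2 w cw - wutil u1 u2 w c = h0 + be * (w.1 - m).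
    rewrite /wutil /h0 /be /g /sl (_ : w.2 = 1 - w.1); last lra.
    ring.
  exact: H.
case: (lerP (s * be) 0) => sb.
  apply: le_trans Hs _; apply: pr_sub => //.
    by apply: (meas_of _ (- s) 0 (s * m)) => w; split => /=; lra.
  move=> w Sw /= hw; apply: key => //.
  case: hs => E; rewrite E in sb hw; nra.
have h0p : 0 < h0.
  by rewrite lt_neqAle h0ge andbT; apply/eqP => E; have := tie (esym E); lra.
have bn0 : be != 0 by apply/eqP => E; rewrite E mulr0 in sb; lra.
pose y := m - h0 / be.
have bym : be * (y - m) = - h0 by rewrite /y; field.
have sy : s * (y - m) < 0.
  have : s * be * (s * (y - m)) = - (s * s) * h0 by rewrite /y; field.
  case: hs => E; rewrite E in sb *; nra.
apply: le_trans (P12 _ sy) _; apply: pr_sub => //.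
  by apply: (meas_of _ s 0 (- (s * y))) => w; split => /=; lra.
move=> w Sw /= hw; apply: key => //.
have : be * (w.1 - m) = be * (w.1 - y) - h0 by rewrite /y; field.
case: hs => E; rewrite E in sb hw; nra.
Qed.

End Prob.


Theorem theorem7 (R : realType) (N M : finType)
  (cap : M -> nat) (pref : M -> rel N)
  (tb : N -> {set M} -> option M)
  (rep : N -> report R M) (s : N) (r' : report R M)
  (pi pi' : N -> option M) :
  (forall c, (0 < cap c)%N) ->
  (forall c, strict_total (pref c)) ->
  tie_rule tb ->
  (forall t, valid_report (rep t)) ->
  valid_report r' ->
  da_outcome (loicv_next tb rep) pref cap pi ->
  da_outcome (loicv_next tb (upd_report rep s r')) pref cap pi' ->
  ~ (wdist (rep s) [set w | spref (util1 (rep s)) (util2 (rep s)) w (pi' s) (pi s)]%classic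
       > (2^-1)%:E)%E.
Proof.
move=> Hcap Hpref Htb Hval Hval' [k1 [T1 [_ Epi]]] [k2 [T2 [_ Epi']]].
set nxt1 := loicv_next tb rep in T1 Epi.
set nxt2 := loicv_next tb (upd_report rep s r') in T2 Epi'.
have Hs : forall u, u != s -> nxt1 u = nxt2 u.
  by move=> u us; apply: boolp.funext => X; rewrite /nxt1 /nxt2 /loicv_next /upd_report (negbTE us).
have Hsp := da_sp Hpref Hs T1 T2.
subst pi pi'.
set S1 := iter k1 _ _ in T1 Hsp *.
set S2 := iter k2 _ _ in T2 Hsp *.
set u1 := util1 (rep s); set u2 := util2 (rep s).
have empty0 : forall X : set (R * R), X = set0 -> ~ ((2^-1)%:E < wdist (rep s) X)%E.
  by move=> X ->; rewrite measure0 lte_fin; lra.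
case E2: (S2.2 s) => [c'|]; last first.
  by apply: empty0; apply/seteqP; split => w.
have cn := Hsp c' E2.
case E1: (S1.2 s) => [c|]; last first.
  by move: cn; rewrite (term_none T1 E1) inE.
case: (eqVneq c c') => [<-|cc'].
  by apply: empty0; apply/seteqP; split => w //=; rewrite ltxx.
have [I1 _ _ _] := Inv_iter cap Hpref nxt1 k1.
set Rs := S1.1 s in cn.
have c'A : c' \in ~: Rs by rewrite inE.
have An0 : ~: Rs != finset.set0 by apply/finset.set0Pn; exists c'.
have [c1 Etb c1b] := Htb s _ (best_nonempty (rep s) An0).
have cb : c \in loicv_best (rep s) Rs.
  by move: (I1 s c E1); rewrite /nxt1 /loicv_next -/Rs Etb => -[<-].
have [_ hS] := Hval s.
have hS' : pr _ (wdist (rep s)) (simplex _) = 1 by rewrite /pr /simplex hS.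
have [cw cwA Hcw] := @condorcet _ (wdist (rep s)) _ u1 u2 _ hS' An0.
have c'c : c' != c by rewrite eq_sym.
have ph := loicv_half cb c'A c'c cwA Hcw.
pose B := [set w : R * R | wutil u1 u2 w c' <= wutil u1 u2 w c]%classic.
have mB : measurable B.
  apply: (meas_of _ _ (u1 c - u1 c') (u2 c - u2 c') 0) => w; rewrite /wutil; split => /=; lra.
have -> : [set w | spref u1 u2 w (Some c') (Some c)]%classic = (~` B)%classic.
  apply/seteqP; split => w /=; rewrite ltNge; [by move/negP | by move/negP].
rewrite (prE _ _ _ (measurableC mB)) pr_C // lte_fin.
move: ph; rewrite /prob_weak -/u1 -/u2 -/(pr _ _ B); lra.
Qed.
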